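(* Let $\sigma_0,\sigma_\epsilon>0$, $\theta_0\in\mathbb{R}$, prior $\Theta\sim N(\theta_0,\sigma_0^2)$, signal $X=\Theta+\epsilon$ with $\epsilon\sim\mathrm{Laplace}(0,\sigma_\epsilon)$ independent of $\Theta$, and let $\theta_1(x)=\mathbb{E}[\Theta\mid X=x]$. With $a=\sqrt2\sigma_0/\sigma_\epsilon$, the DeGroot coefficient $\omega=\frac{d\theta_1}{dx}\big|_{x=\theta_0}$ is $$\omega=\frac a2\Bigl(\frac{2}{\sqrt\pi\,\operatorname{erfcx}(a/2)}-a\Bigr),$$ where $\operatorname{erfcx}(y)=e^{y^2}\bigl(1-\frac{2}{\sqrt\pi}\int_0^y e^{-t^2}dt\bigr)$.
   Context: $\mathrm{Laplace}(\mu,s)$ has density $t\mapsto\frac{1}{2s}e^{-|t-\mu|/s}$. The posterior mean is $\theta_1(x)=\frac{\int\theta f_\Theta(\theta)l_\epsilon(x-\theta)d\theta}{\int f_\Theta(\theta)l_\epsilon(x-\theta)d\theta}$. *)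

(* Defs.v *)
From Stdlib Require Import Reals.
From Coquelicot Require Import Coquelicot.
Open Scope R_scope.

Definition normal_pdf (m s t : R) : R :=
  / (s * sqrt (2 * PI)) * exp (- (t - m) ^ 2 / (2 * s ^ 2)).

Definition laplace_pdf (mu s t : R) : R :=
  / (2 * s) * exp (- Rabs (t - mu) / s).

Definition RInt_R (f : R -> R) : R :=
  RInt_gen f (Rbar_locally m_infty) (Rbar_locally p_infty).

(* posterior mean E[Theta | X = x] for Theta ~ N(theta0, s0^2),
   X = Theta + eps, eps ~ Laplace(0, se) independent of Theta *)
Definition theta1 (theta0 s0 se x : R) : R :=
  RInt_R (fun th => th * normal_pdf theta0 s0 th * laplace_pdf 0 se (x - th))
  / RInt_R (fun th => normal_pdf theta0 s0 th * laplace_pdf 0 se (x - th)).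

Definition erfcx (y : R) : R :=
  exp (y ^ 2) * (1 - 2 / sqrt PI * RInt (fun t => exp (- t ^ 2)) 0 y).

(* Main.v *)
Require Import Defs.
From Stdlib Require Import Reals.
From Coquelicot Require Import Coquelicot.
From Stdlib Require Import Lra.
Open Scope R_scope.

Ltac req := match goal with |- ?a = ?b => change (@eq R a b) end.

Definition Erf (x : R) : R := RInt (fun t => exp (- t ^ 2)) 0 x.

Lemma cont_gauss (t : R) : continuous (fun t => exp (- t ^ 2)) t.
Proof. apply (@ex_derive_continuous R_AbsRing R_NormedModule); auto_derive; auto. Qed.

Lemma ex_RInt_gauss a b : ex_RInt (fun t => exp (- t ^ 2)) a b.
Proof. apply (@ex_RInt_continuous R_CompleteNormedModule); intros; apply cont_gauss. Qed.

Lemma Erf_derive (x : R) : is_derive Erf x (exp (- x ^ 2)).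
Proof.
  apply (is_derive_RInt (fun t => exp (- t ^ 2)) Erf 0 x).
  - apply filter_forall; intros y. apply (@RInt_correct R_CompleteNormedModule), ex_RInt_gauss.
  - apply cont_gauss.
Qed.

Definition gfun (x : R) : R :=
  RInt (fun t => exp (- (x ^ 2 * (1 + t ^ 2))) / (1 + t ^ 2)) 0 1.

Lemma t2pos t : 0 < 1 + t ^ 2.
Proof. assert (0 <= t^2) by (apply pow2_ge_0). lra. Qed.

Lemma gfun_dparam x : is_derive gfun x
   (RInt (fun t => Derive (fun u => exp (- (u ^ 2 * (1 + t ^ 2))) / (1 + t ^ 2)) x) 0 1).
Proof.
  unfold gfun.
  apply (is_derive_RInt_param (fun u t => exp (- (u ^ 2 * (1 + t ^ 2))) / (1 + t ^ 2))).
    - apply filter_forall; intros y t _. auto_derive. pose proof (t2pos t). lra.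
    - intros t _.
      apply continuity_2d_pt_ext with (fun u v => -2 * u * exp (- (u * u * (1 + v * v)))).
      { intros u v. symmetry. apply is_derive_unique. auto_derive.
        pose proof (t2pos v); lra.
        rewrite ?Rmult_1_r. field. pose proof (t2pos v); lra. }
      apply continuity_2d_pt_mult.
      + apply continuity_2d_pt_mult. apply continuity_2d_pt_const. apply continuity_2d_pt_id1.
      + apply continuity_1d_2d_pt_comp. apply derivable_continuous_pt, derivable_pt_exp.
        apply continuity_2d_pt_opp. apply continuity_2d_pt_mult.
        apply continuity_2d_pt_mult; apply continuity_2d_pt_id1.
        apply continuity_2d_pt_plus. apply continuity_2d_pt_const.
        apply continuity_2d_pt_mult; apply continuity_2d_pt_id2.
    - apply filter_forall; intros y. apply (@ex_RInt_continuous R_CompleteNormedModule); intros z _.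
      apply (@ex_derive_continuous R_AbsRing R_NormedModule); auto_derive.
      pose proof (t2pos z); lra.
Qed.

Lemma gfun_derive (x : R) : is_derive gfun x (- 2 * exp (- x ^ 2) * Erf x).
Proof.
  pose proof (gfun_dparam x) as H.
  replace (- 2 * exp (- x ^ 2) * Erf x) with
   (RInt (fun t => Derive (fun u => exp (- (u ^ 2 * (1 + t ^ 2))) / (1 + t ^ 2)) x) 0 1); [exact H|].
  rewrite (RInt_ext _ (fun t => (-2 * exp (- x ^ 2)) * (x * (exp (- (x * t + 0) ^ 2))))).
  2:{ intros t _. assert (Hd : Derive (fun u => exp (- (u ^ 2 * (1 + t ^ 2))) / (1 + t ^ 2)) x
        = -2 * x * exp (- (x ^ 2 * (1 + t ^ 2)))).
      { apply is_derive_unique. auto_derive. pose proof (t2pos t); lra.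
        rewrite ?Rmult_1_r. replace (x * x * (1 + t * t)) with (x ^ 2 * (1 + t ^ 2)) by ring. field. pose proof (t2pos t); lra. }
      rewrite Hd.
      replace (- (x ^ 2 * (1 + t ^ 2))) with (- x ^ 2 + - (x * t + 0) ^ 2) by ring.
      rewrite exp_plus. change (@eq R (-2 * x * (exp (- x ^ 2) * exp (- (x * t + 0) ^ 2))) (-2 * exp (- x ^ 2) * (x * exp (- (x * t + 0) ^ 2)))). ring. }
  assert (HR : RInt (fun t => (-2 * exp (- x ^ 2)) * (x * exp (- (x * t + 0) ^ 2))) 0 1
     = (-2 * exp (- x ^ 2)) * RInt (fun t => x * exp (- (x * t + 0) ^ 2)) 0 1).
  { apply (RInt_scal (V:=R_CompleteNormedModule)).
    apply (@ex_RInt_continuous R_CompleteNormedModule); intros; apply (@ex_derive_continuous R_AbsRing R_NormedModule); auto_derive; auto. }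
  rewrite HR.
  assert (HL : RInt (fun t => x * exp (- (x * t + 0) ^ 2)) 0 1 = RInt (fun t => exp (- t ^ 2)) (x * 0 + 0) (x * 1 + 0)).
  { apply (RInt_comp_lin (V:=R_CompleteNormedModule) (fun t => exp (- t ^ 2)) x 0 0 1 (ex_RInt_gauss _ _)). }
  rewrite HL. unfold Erf.
  replace (x * 0 + 0) with 0 by ring. replace (x * 1 + 0) with x by ring. reflexivity.
Qed.

Lemma gfun0 : gfun 0 = PI / 4.
Proof.
  unfold gfun.
  rewrite (RInt_ext _ (fun t => / (1 + t ^ 2))).
  2:{ intros t _. replace (- (0 ^ 2 * (1 + t ^ 2))) with 0 by ring. rewrite exp_0. unfold Rdiv. req. ring. }
  assert (H : is_RInt (fun t => / (1 + t ^ 2)) 0 1 (atan 1 - atan 0)).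
  { apply (is_RInt_derive (V:=R_CompleteNormedModule) atan).
    - intros t _. assert (E : / (1 + t ^ 2) = / (1 + t²)) by (unfold Rsqr; f_equal; ring).
      rewrite E. apply is_derive_atan.
    - intros t _. apply (@ex_derive_continuous R_AbsRing R_NormedModule); auto_derive.
      pose proof (t2pos t); lra. }
  rewrite (is_RInt_unique _ _ _ _ H). rewrite atan_1, atan_0. ring.
Qed.

Lemma h_const x : Erf x ^ 2 + gfun x = PI / 4.
Proof.
  assert (H : is_RInt (fun _ => 0) 0 x ((Erf x ^ 2 + gfun x) - (Erf 0 ^ 2 + gfun 0))).
  { apply (is_RInt_derive (V:=R_CompleteNormedModule) (fun y => Erf y ^ 2 + gfun y)).
    - intros y _. auto_derive.
      + split. eexists; apply Erf_derive. split; [eexists; apply gfun_derive|easy].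
      + replace (Derive (fun x : R => Erf x) y) with (exp (- y ^ 2)) by (symmetry; apply is_derive_unique, Erf_derive).
        replace (Derive (fun x : R => gfun x) y) with (- 2 * exp (- y ^ 2) * Erf y) by (symmetry; apply is_derive_unique, gfun_derive).
        ring.
    - intros; apply continuous_const. }
  assert (H2 := is_RInt_const 0 x 0).
  assert (U := is_RInt_unique _ _ _ _ H). 
  assert (U2 := is_RInt_unique _ _ _ _ H2).
  rewrite U in U2. unfold scal in U2; simpl in U2; unfold mult in U2; simpl in U2.
  assert (E0 : Erf 0 = 0) by (unfold Erf; apply (RInt_point (V:=R_CompleteNormedModule))). rewrite E0 in U2. rewrite gfun0 in U2.
  simpl. nra.
Qed.

Lemma RInt_const01 (c : R) : RInt (fun _ => c) 0 1 = c.
Proof. rewrite RInt_const. unfold scal; simpl; unfold mult; simpl. ring. Qed.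

Lemma gfun_le x : gfun x <= exp (- x ^ 2).
Proof.
  unfold gfun.
  assert (H := RInt_le (fun t => exp (- (x ^ 2 * (1 + t ^ 2))) / (1 + t ^ 2)) (fun _ => exp (- x ^ 2)) 0 1).
  rewrite RInt_const in H. unfold scal in H; simpl in H; unfold mult in H; simpl in H.
  replace (exp (- x ^ 2)) with ((1 - 0) * exp (- x ^ 2)) by ring.
  apply H; clear H.
  - lra.
  - apply (@ex_RInt_continuous R_CompleteNormedModule); intros z _.
    apply (@ex_derive_continuous R_AbsRing R_NormedModule); auto_derive.
    pose proof (t2pos z); lra.
  - apply ex_RInt_const.
  - intros t Ht. pose proof (t2pos t).
    assert (exp (- (x ^ 2 * (1 + t ^ 2))) <= exp (- x ^ 2)).
    { destruct (Req_dec (- (x ^ 2 * (1 + t ^ 2))) (- x ^ 2)) as [E|E].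
      rewrite E; lra. left; apply exp_increasing.
      assert (0 <= x^2 * t^2) by (apply Rmult_le_pos; apply pow2_ge_0). nra. }
    assert (0 < exp (- (x ^ 2 * (1 + t ^ 2)))) by apply exp_pos.
    apply Rle_trans with (exp (- (x ^ 2 * (1 + t ^ 2)))); [|assumption].
    unfold Rdiv. apply Rle_trans with (exp (- (x ^ 2 * (1 + t ^ 2))) * 1); [|lra].
    apply Rmult_le_compat_l. lra.
    rewrite <- Rinv_1. apply Rinv_le_contravar. lra. assert (0 <= t^2) by apply pow2_ge_0. lra.
Qed.

Lemma gfun_pos x : 0 < gfun x.
Proof.
  unfold gfun.
  assert (H := RInt_le (fun _ => exp (- (2 * x ^ 2)) / 2) (fun t => exp (- (x ^ 2 * (1 + t ^ 2))) / (1 + t ^ 2)) 0 1).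
  rewrite RInt_const01 in H.
  eapply Rlt_le_trans; [|apply H].
  - pose proof (exp_pos (- (2 * x ^ 2))). lra.
  - lra.
  - apply ex_RInt_const.
  - apply (@ex_RInt_continuous R_CompleteNormedModule); intros z _.
    apply (@ex_derive_continuous R_AbsRing R_NormedModule); auto_derive.
    pose proof (t2pos z); lra.
  - intros t Ht. pose proof (t2pos t).
    assert (Ht2 : t ^ 2 <= 1) by nra.
    assert (exp (- (2 * x ^ 2)) <= exp (- (x ^ 2 * (1 + t ^ 2)))).
    { destruct (Req_dec (- (2 * x ^ 2)) (- (x ^ 2 * (1 + t ^ 2)))) as [E|E].
      rewrite E; lra. left; apply exp_increasing.
      assert (0 <= x^2) by apply pow2_ge_0. nra. }
    assert (0 < exp (- (2 * x ^ 2))) by apply exp_pos.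
    unfold Rdiv. apply Rmult_le_compat. lra. left; apply Rinv_0_lt_compat; lra. assumption.
    apply Rinv_le_contravar; lra.
Qed.

Lemma sqrtPI_pos : 0 < sqrt PI.
Proof. apply sqrt_lt_R0, PI_RGT_0. Qed.

Lemma sqrtPI2 : (sqrt PI / 2) ^ 2 = PI / 4.
Proof. unfold Rdiv. rewrite Rpow_mult_distr, pow2_sqrt. field. left; apply PI_RGT_0. Qed.

Lemma Erf_lt y : Erf y < sqrt PI / 2.
Proof.
  pose proof (h_const y). pose proof (gfun_pos y). pose proof sqrtPI_pos.
  pose proof sqrtPI2.
  destruct (Rle_or_lt (Erf y) 0). lra. nra.
Qed.

Lemma Erf_ge0 y : 0 <= y -> 0 <= Erf y.
Proof.
  intros Hy. unfold Erf. apply RInt_ge_0. auto. apply ex_RInt_gauss.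
  intros; left; apply exp_pos.
Qed.

Lemma Erf_odd y : Erf (- y) = - Erf y.
Proof.
  unfold Erf.
  assert (HL : RInt (fun t => (-1) * exp (- (-1 * t + 0) ^ 2)) 0 y = RInt (fun t => exp (- t ^ 2)) (-1 * 0 + 0) (-1 * y + 0)).
  { apply (RInt_comp_lin (V:=R_CompleteNormedModule) (fun t => exp (- t ^ 2)) (-1) 0 0 y (ex_RInt_gauss _ _)). }
  replace (-1 * 0 + 0) with 0 in HL by ring. replace (-1 * y + 0) with (- y) in HL by ring.
  rewrite <- HL.
  rewrite (RInt_ext _ (fun t => (-1) * exp (- t ^ 2))).
  2:{ intros t _. replace ((-1 * t + 0) ^ 2) with (t ^ 2) by ring. reflexivity. }
  assert (HR : RInt (fun t => (-1) * exp (- t ^ 2)) 0 y = (-1) * RInt (fun t => exp (- t ^ 2)) 0 y).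
  { apply (RInt_scal (V:=R_CompleteNormedModule)). apply ex_RInt_gauss. }
  rewrite HR. ring.
Qed.

Lemma ball_R (y z : R) (eps : R) : Rabs (z - y) < eps -> ball y eps z.
Proof. intros H. unfold ball; simpl; unfold AbsRing_ball, abs, minus, plus, opp; simpl. exact H. Qed.

Lemma lim_p_bound (f : R -> R) (l C : R) :
  (exists M, forall x, M < x -> Rabs (f x - l) <= C / x) -> is_lim f p_infty l.
Proof.
  intros [M HM]. unfold is_lim. apply (proj2 (filterlim_locally f l)).
  intros eps. simpl. exists (Rmax (Rmax M 1) (Rabs C / eps)).
  intros x Hx. apply ball_R.
  assert (HxM : M < x) by (eapply Rle_lt_trans; [|exact Hx]; eapply Rle_trans; [apply Rmax_l|apply Rmax_l]).
  assert (Hx1 : 1 < x) by (eapply Rle_lt_trans; [|exact Hx]; eapply Rle_trans; [apply Rmax_r|apply Rmax_l]).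
  assert (HxC : Rabs C / eps < x) by (eapply Rle_lt_trans; [|exact Hx]; apply Rmax_r).
  eapply Rle_lt_trans. apply HM; auto.
  pose proof (cond_pos eps).
  apply Rle_lt_trans with (Rabs C / x).
  { unfold Rdiv. apply Rmult_le_compat_r. left; apply Rinv_0_lt_compat; lra. apply Rle_abs. }
  apply Rmult_lt_reg_r with x. lra. unfold Rdiv. rewrite Rmult_assoc, Rinv_l by lra.
  apply Rmult_lt_reg_r with (/ eps). apply Rinv_0_lt_compat; lra.
  rewrite Rmult_1_r. replace (eps * x * / eps) with x by (field; lra). exact HxC.
Qed.

Lemma lim_m_bound (f : R -> R) (l C : R) :
  (exists M, forall x, x < M -> Rabs (f x - l) <= C / (- x)) -> is_lim f m_infty l.
Proof.
  intros [M HM].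
  assert (H : is_lim (fun y => f (- y)) p_infty l).
  { apply lim_p_bound with C. exists (- M). intros x Hx. rewrite <- (Ropp_involutive x) at 2.
    apply HM. lra. }
  unfold is_lim in *. apply (proj2 (filterlim_locally f l)).
  intros eps. destruct (proj1 (filterlim_locally _ l) H eps) as [N HN].
  exists (- N). intros x Hx. replace x with (- - x) by ring. apply HN. lra.
Qed.

Lemma exp_neg_sq_le (x : R) : 0 < x -> exp (- x ^ 2) <= 1 / x.
Proof.
  intros Hx. pose proof (exp_ineq1_le (x ^ 2)). pose proof (exp_pos (x ^ 2)).
  rewrite exp_Ropp. unfold Rdiv. rewrite Rmult_1_l. apply Rinv_le_contravar. auto.
  assert (x <= 1 + x ^ 2) by nra. lra.
Qed.

Lemma gauss_lim_p : is_lim (fun y => exp (- y ^ 2)) p_infty 0.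
Proof.
  apply lim_p_bound with 1. exists 0. intros x Hx.
  rewrite Rminus_0_r, Rabs_pos_eq by (left; apply exp_pos). now apply exp_neg_sq_le.
Qed.

Lemma gauss_lim_m : is_lim (fun y => exp (- y ^ 2)) m_infty 0.
Proof.
  apply lim_m_bound with 1. exists 0. intros x Hx.
  rewrite Rminus_0_r, Rabs_pos_eq by (left; apply exp_pos).
  replace (x ^ 2) with ((- x) ^ 2) by ring. apply exp_neg_sq_le. lra.
Qed.

Lemma Erf_lim_p : is_lim Erf p_infty (sqrt PI / 2).
Proof.
  apply lim_p_bound with (2 / sqrt PI). exists 0. intros x Hx.
  pose proof (h_const x). pose proof (gfun_le x). pose proof (Erf_lt x).
  pose proof (Erf_ge0 x (Rlt_le _ _ Hx)). pose proof sqrtPI_pos. pose proof sqrtPI2.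
  pose proof (exp_neg_sq_le x Hx).
  rewrite Rabs_minus_sym, Rabs_pos_eq by lra.
  assert (Hd : sqrt PI / 2 - Erf x = gfun x / (sqrt PI / 2 + Erf x)).
  { field_simplify_eq. nra. lra. }
  rewrite Hd.
  apply Rle_trans with (gfun x / (sqrt PI / 2)).
  { unfold Rdiv. apply Rmult_le_compat_l. left; apply gfun_pos.
    apply Rinv_le_contravar; lra. }
  apply Rle_trans with ((1 / x) / (sqrt PI / 2)).
  { unfold Rdiv. apply Rmult_le_compat_r. left; apply Rinv_0_lt_compat; lra. unfold Rdiv in *; lra. }
  right. field. split; lra.
Qed.

Lemma Erf_lim_m : is_lim Erf m_infty (- (sqrt PI / 2)).
Proof.
  assert (H : is_lim (fun y => -1 * Erf (-1 * y)) m_infty (Rbar_mult (-1) (sqrt PI / 2))).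
  { apply is_lim_scal_l. apply (is_lim_comp Erf (fun y => -1 * y) m_infty (sqrt PI / 2) p_infty).
    apply Erf_lim_p.
    unfold is_lim. intros P [M HM]. exists (- M). intros x Hx. apply HM. lra.
    exists 0. intros; discriminate. }
  simpl in H. replace (-1 * (sqrt PI / 2)) with (- (sqrt PI / 2)) in H by ring.
  unfold is_lim in *. eapply filterlim_ext; [|exact H]. intros y. simpl.
  replace (-1 * y) with (- y) by ring. rewrite Erf_odd. ring.
Qed.

Lemma LemR (F f : R -> R) (l b0 : R) :
  (forall t, is_derive F t (f t)) -> (forall t, continuous f t) ->
  is_lim F p_infty l -> is_RInt_gen f (at_point b0) (Rbar_locally p_infty) (l - F b0).
Proof.
  intros HD HC HL.
  apply (filterlimi_lim_ext_loc (fun ab => F (snd ab) + - F (fst ab))).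
  - apply Filter_prod with (fun a => a = b0) (fun _ => True).
    + reflexivity.
    + exists 0; auto.
    + intros a y -> _. simpl.
      apply (is_RInt_derive (V:=R_CompleteNormedModule) F f); intros; auto.
  - apply (filterlim_comp_2 (F := filter_prod (at_point b0) (Rbar_locally p_infty))
      (fun ab => F (snd ab)) (fun ab => - F (fst ab)) Rplus
      (G := Rbar_locally l) (H := Rbar_locally (- F b0))).
    + eapply filterlim_comp. apply filterlim_snd. exact HL.
    + intros P HP. simpl in HP. 
      apply Filter_prod with (fun a => a = b0) (fun _ => True).
      * reflexivity.
      * exists 0; auto.
      * intros a y -> _. simpl. apply locally_singleton. exact HP.
    + apply (filterlim_Rbar_plus (Finite l) (Finite (- F b0)) (Finite (l - F b0))).
      reflexivity.
Qed.

Lemma LemL (F f : R -> R) (l b0 : R) :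
  (forall t, is_derive F t (f t)) -> (forall t, continuous f t) ->
  is_lim F m_infty l -> is_RInt_gen f (Rbar_locally m_infty) (at_point b0) (F b0 - l).
Proof.
  intros HD HC HL.
  apply (filterlimi_lim_ext_loc (fun ab => F (snd ab) + - F (fst ab))).
  - apply Filter_prod with (fun _ => True) (fun a => a = b0).
    + exists 0; auto.
    + reflexivity.
    + intros y a _ ->. simpl.
      apply (is_RInt_derive (V:=R_CompleteNormedModule) F f); intros; auto.
  - apply (filterlim_comp_2 (F := filter_prod (Rbar_locally m_infty) (at_point b0))
      (fun ab => F (snd ab)) (fun ab => - F (fst ab)) Rplus
      (G := Rbar_locally (F b0)) (H := Rbar_locally (- l))).
    + intros P HP. simpl in HP.
      apply Filter_prod with (fun _ => True) (fun a => a = b0).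
      * exists 0; auto.
      * reflexivity.
      * intros y a _ ->. simpl. apply locally_singleton. exact HP.
    + assert (HL' : is_lim (fun t => - F t) m_infty (- l)).
      { apply (is_lim_opp F m_infty l). exact HL. }
      apply (filterlim_comp (R*R) R R fst (fun t => - F t) (filter_prod (Rbar_locally m_infty) (at_point b0)) (Rbar_locally m_infty) (Rbar_locally (- l))).
      apply filterlim_fst. exact HL'.
    + apply (filterlim_Rbar_plus (Finite (F b0)) (Finite (- l)) (Finite (F b0 - l))).
      reflexivity.
Qed.

Definition Hf (b k1 k2 mu t : R) : R := k1 * Erf ((t - mu) / b) + k2 * exp (- ((t - mu) / b) ^ 2).

Lemma DErf y : Derive (fun x : R => Erf x) y = exp (- y ^ 2).
Proof. apply is_derive_unique, Erf_derive. Qed.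

Lemma Hf_derive b k1 k2 mu t : 0 < b ->
  is_derive (Hf b k1 k2 mu) t (exp (- ((t - mu) / b) ^ 2) / b * (k1 - 2 * k2 * ((t - mu) / b))).
Proof.
  intros Hb. unfold Hf. auto_derive.
  - eexists; apply Erf_derive.
  - rewrite DErf. unfold Rminus, Rdiv. simpl. field. lra.
Qed.

Lemma Hf_lim_p b k1 k2 mu : 0 < b -> is_lim (Hf b k1 k2 mu) p_infty (k1 * (sqrt PI / 2)).
Proof.
  intros Hb.
  assert (Hu : is_lim (fun t => (t - mu) / b) p_infty p_infty).
  { intros P [M HM]. exists (M * b + mu). intros x Hx. apply HM.
    apply Rmult_lt_reg_r with b; auto. unfold Rdiv. rewrite Rmult_assoc, Rinv_l, Rmult_1_r by lra. lra. }
  assert (H1 := is_lim_comp Erf _ p_infty (sqrt PI / 2) p_infty Erf_lim_p Hu).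
  assert (H2 := is_lim_comp (fun y => exp (- y ^ 2)) _ p_infty 0 p_infty gauss_lim_p Hu).
  specialize (H1 ltac:(exists 0; intros x _ Hx; discriminate Hx)).
  specialize (H2 ltac:(exists 0; intros x _ Hx; discriminate Hx)).
  assert (H := is_lim_plus' _ _ _ _ _ (is_lim_scal_l _ k1 _ _ H1) (is_lim_scal_l _ k2 _ _ H2)).
  simpl in H. rewrite Rmult_0_r, Rplus_0_r in H. exact H.
Qed.

Lemma Hf_lim_m b k1 k2 mu : 0 < b -> is_lim (Hf b k1 k2 mu) m_infty (k1 * - (sqrt PI / 2)).
Proof.
  intros Hb.
  assert (Hu : is_lim (fun t => (t - mu) / b) m_infty m_infty).
  { intros P [M HM]. exists (M * b + mu). intros x Hx. apply HM.
    apply Rmult_lt_reg_r with b; auto. unfold Rdiv. rewrite Rmult_assoc, Rinv_l, Rmult_1_r by lra. lra. }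
  assert (H1 := is_lim_comp Erf _ m_infty (- (sqrt PI / 2)) m_infty Erf_lim_m Hu).
  assert (H2 := is_lim_comp (fun y => exp (- y ^ 2)) _ m_infty 0 m_infty gauss_lim_m Hu).
  specialize (H1 ltac:(exists 0; intros x _ Hx; discriminate Hx)).
  specialize (H2 ltac:(exists 0; intros x _ Hx; discriminate Hx)).
  assert (H := is_lim_plus' _ _ _ _ _ (is_lim_scal_l _ k1 _ _ H1) (is_lim_scal_l _ k2 _ _ H2)).
  simpl in H. rewrite Rmult_0_r, Rplus_0_r in H. exact H.
Qed.

Definition Kc (s : R) := / (s * sqrt (2 * PI)).
Definition mu1 m s se := m + s ^ 2 / se.
Definition mu2 m s se := m - s ^ 2 / se.
Definition A1 m s se x := Kc s * / (2 * se) * exp (- x / se + m / se + s ^ 2 / (2 * se ^ 2)).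
Definition A2 m s se x := Kc s * / (2 * se) * exp (x / se - m / se + s ^ 2 / (2 * se ^ 2)).

Lemma sqrt2_pos : 0 < sqrt 2.
Proof. apply sqrt_lt_R0; lra. Qed.

Lemma sq_b y s : s <> 0 -> (y / (sqrt 2 * s)) ^ 2 = y ^ 2 / (2 * s ^ 2).
Proof.
  intros Hs. pose proof sqrt2_pos.
  replace ((y / (sqrt 2 * s)) ^ 2) with (y ^ 2 / (sqrt 2 ^ 2 * s ^ 2)) by (field; split; lra).
  rewrite pow2_sqrt by lra. reflexivity.
Qed.

Lemma exp_comb a b c d : a + b = c + d -> exp a * exp b = exp c * exp d.
Proof. intros H. rewrite <- !exp_plus, H. reflexivity. Qed.

Lemma left_id m s se x t : 0 < s -> 0 < se -> t < x ->
  normal_pdf m s t * laplace_pdf 0 se (x - t) = A1 m s se x * exp (- ((t - mu1 m s se) / (sqrt 2 * s)) ^ 2).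
Proof.
  intros Hs Hse Ht. unfold normal_pdf, laplace_pdf, A1, Kc.
  rewrite Rminus_0_r, Rabs_pos_eq by lra. rewrite sq_b by lra.
  assert (E : exp (- (t - m) ^ 2 / (2 * s ^ 2)) * exp (- (x - t) / se)
     = exp (- x / se + m / se + s ^ 2 / (2 * se ^ 2)) * exp (- ((t - mu1 m s se) ^ 2 / (2 * s ^ 2)))).
  { apply exp_comb. unfold mu1. field. lra. }
  transitivity (/ (s * sqrt (2 * PI)) * / (2 * se) * (exp (- (t - m) ^ 2 / (2 * s ^ 2)) * exp (- (x - t) / se))).
  ring. rewrite E. ring.
Qed.

Lemma right_id m s se x t : 0 < s -> 0 < se -> x < t ->
  normal_pdf m s t * laplace_pdf 0 se (x - t) = A2 m s se x * exp (- ((t - mu2 m s se) / (sqrt 2 * s)) ^ 2).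
Proof.
  intros Hs Hse Ht. unfold normal_pdf, laplace_pdf, A2, Kc.
  rewrite Rminus_0_r, Rabs_left by lra. rewrite sq_b by lra.
  assert (E : exp (- (t - m) ^ 2 / (2 * s ^ 2)) * exp (- - (x - t) / se)
     = exp (x / se - m / se + s ^ 2 / (2 * se ^ 2)) * exp (- ((t - mu2 m s se) ^ 2 / (2 * s ^ 2)))).
  { apply exp_comb. unfold mu2. field. lra. }
  transitivity (/ (s * sqrt (2 * PI)) * / (2 * se) * (exp (- (t - m) ^ 2 / (2 * s ^ 2)) * exp (- - (x - t) / se))).
  ring. rewrite E. ring.
Qed.

Definition gL (A mu b t : R) := A * exp (- ((t - mu) / b) ^ 2).

Lemma gL_cont A mu b t : b <> 0 -> continuous (gL A mu b) t.
Proof. intros. apply (@ex_derive_continuous R_AbsRing R_NormedModule). unfold gL. auto_derive. auto. Qed.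

Lemma tgL_cont A mu b t : b <> 0 -> continuous (fun t => t * gL A mu b t) t.
Proof. intros. apply (@ex_derive_continuous R_AbsRing R_NormedModule). unfold gL. auto_derive. auto. Qed.

Lemma F0_derive A mu b t : 0 < b -> is_derive (Hf b (A * b) 0 mu) t (gL A mu b t).
Proof.
  intros Hb. eapply is_derive_ext; [intros; reflexivity|].
  replace (gL A mu b t) with (exp (- ((t - mu) / b) ^ 2) / b * (A * b - 2 * 0 * ((t - mu) / b))).
  apply Hf_derive; auto. unfold gL. field. lra.
Qed.

Lemma F1_derive A mu b t : 0 < b -> is_derive (Hf b (mu * A * b) (- (A * b ^ 2 / 2)) mu) t (t * gL A mu b t).
Proof.
  intros Hb. 
  replace (t * gL A mu b t) with (exp (- ((t - mu) / b) ^ 2) / b * (mu * A * b - 2 * (- (A * b ^ 2 / 2)) * ((t - mu) / b))).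
  apply Hf_derive; auto. unfold gL. field. lra.
Qed.

Lemma intL0 A mu b x : 0 < b ->
  is_RInt_gen (gL A mu b) (Rbar_locally m_infty) (at_point x) (Hf b (A * b) 0 mu x - (A * b) * - (sqrt PI / 2)).
Proof.
  intros Hb. apply LemL. intros; apply F0_derive; auto. intros; apply gL_cont; lra. apply Hf_lim_m; auto.
Qed.

Lemma intL1 A mu b x : 0 < b ->
  is_RInt_gen (fun t => t * gL A mu b t) (Rbar_locally m_infty) (at_point x)
    (Hf b (mu * A * b) (- (A * b ^ 2 / 2)) mu x - (mu * A * b) * - (sqrt PI / 2)).
Proof.
  intros Hb. apply LemL. intros; apply F1_derive; auto. intros; apply tgL_cont; lra. apply Hf_lim_m; auto.
Qed.

Lemma intR0 A mu b x : 0 < b ->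
  is_RInt_gen (gL A mu b) (at_point x) (Rbar_locally p_infty) ((A * b) * (sqrt PI / 2) - Hf b (A * b) 0 mu x).
Proof.
  intros Hb. apply LemR. intros; apply F0_derive; auto. intros; apply gL_cont; lra. apply Hf_lim_p; auto.
Qed.

Lemma intR1 A mu b x : 0 < b ->
  is_RInt_gen (fun t => t * gL A mu b t) (at_point x) (Rbar_locally p_infty)
    ((mu * A * b) * (sqrt PI / 2) - Hf b (mu * A * b) (- (A * b ^ 2 / 2)) mu x).
Proof.
  intros Hb. apply LemR. intros; apply F1_derive; auto. intros; apply tgL_cont; lra. apply Hf_lim_p; auto.
Qed.

Definition Dval m s se x :=
  (Hf (sqrt 2 * s) (A1 m s se x * (sqrt 2 * s)) 0 (mu1 m s se) x - (A1 m s se x * (sqrt 2 * s)) * - (sqrt PI / 2))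
  + ((A2 m s se x * (sqrt 2 * s)) * (sqrt PI / 2) - Hf (sqrt 2 * s) (A2 m s se x * (sqrt 2 * s)) 0 (mu2 m s se) x).

Definition Nval m s se x :=
  (Hf (sqrt 2 * s) (mu1 m s se * A1 m s se x * (sqrt 2 * s)) (- (A1 m s se x * (sqrt 2 * s) ^ 2 / 2)) (mu1 m s se) x
     - (mu1 m s se * A1 m s se x * (sqrt 2 * s)) * - (sqrt PI / 2))
  + ((mu2 m s se * A2 m s se x * (sqrt 2 * s)) * (sqrt PI / 2)
     - Hf (sqrt 2 * s) (mu2 m s se * A2 m s se x * (sqrt 2 * s)) (- (A2 m s se x * (sqrt 2 * s) ^ 2 / 2)) (mu2 m s se) x).

Lemma PF' (x : Rbar) : ProperFilter' (Rbar_locally x).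
Proof. apply Proper_StrongProper, Rbar_locally_filter. Qed.

Lemma filt_left (x : R) (P : R -> Prop) : (forall t, t < x -> P t) ->
  filter_prod (Rbar_locally m_infty) (at_point x)
    (fun ab : R * R => forall t, Rmin (fst ab) (snd ab) < t < Rmax (fst ab) (snd ab) -> P t).
Proof.
  intros HP. apply Filter_prod with (fun a => a < x) (fun a => a = x).
  - exists x; auto.
  - reflexivity.
  - intros a y Ha ->. simpl. intros t Ht. apply HP.
    rewrite Rmax_right in Ht by lra. lra.
Qed.

Lemma filt_right (x : R) (P : R -> Prop) : (forall t, x < t -> P t) ->
  filter_prod (at_point x) (Rbar_locally p_infty)
    (fun ab : R * R => forall t, Rmin (fst ab) (snd ab) < t < Rmax (fst ab) (snd ab) -> P t).
Proof.
  intros HP. apply Filter_prod with (fun a => a = x) (fun a => x < a).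
  - reflexivity.
  - exists x; auto.
  - intros a y -> Hy. simpl. intros t Ht. apply HP.
    rewrite Rmin_left in Ht by lra. lra.
Qed.

Lemma D_eq m s se x : 0 < s -> 0 < se ->
  RInt_R (fun th => normal_pdf m s th * laplace_pdf 0 se (x - th)) = Dval m s se x.
Proof.
  intros Hs Hse. pose proof sqrt2_pos as H2.
  assert (Hb : 0 < sqrt 2 * s) by (apply Rmult_lt_0_compat; lra).
  unfold RInt_R. apply (is_RInt_gen_unique (V:=R_CompleteNormedModule) (Fa:=Rbar_locally m_infty) (Fb:=Rbar_locally p_infty)).
  unfold Dval.
  apply (is_RInt_gen_Chasles (V:=R_NormedModule) _ x).
  - eapply is_RInt_gen_ext; [| apply (intL0 (A1 m s se x) (mu1 m s se) _ x Hb)].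
    apply filt_left. intros t Ht. unfold gL. symmetry. apply left_id; auto.
  - eapply is_RInt_gen_ext; [| apply (intR0 (A2 m s se x) (mu2 m s se) _ x Hb)].
    apply filt_right. intros t Ht. unfold gL. symmetry. apply right_id; auto.
Qed.

Lemma N_eq m s se x : 0 < s -> 0 < se ->
  RInt_R (fun th => th * normal_pdf m s th * laplace_pdf 0 se (x - th)) = Nval m s se x.
Proof.
  intros Hs Hse. pose proof sqrt2_pos as H2.
  assert (Hb : 0 < sqrt 2 * s) by (apply Rmult_lt_0_compat; lra).
  unfold RInt_R. apply (is_RInt_gen_unique (V:=R_CompleteNormedModule) (Fa:=Rbar_locally m_infty) (Fb:=Rbar_locally p_infty)).
  unfold Nval.
  apply (is_RInt_gen_Chasles (V:=R_NormedModule) _ x).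
  - eapply is_RInt_gen_ext; [| apply (intL1 (A1 m s se x) (mu1 m s se) _ x Hb)].
    apply filt_left. intros t Ht. unfold gL. rewrite Rmult_assoc. f_equal. symmetry. apply left_id; auto.
  - eapply is_RInt_gen_ext; [| apply (intR1 (A2 m s se x) (mu2 m s se) _ x Hb)].
    apply filt_right. intros t Ht. unfold gL. rewrite Rmult_assoc. f_equal. symmetry. apply right_id; auto.
Qed.

Ltac s2tac := field_simplify_eq;
  [ repeat (match goal with |- context [sqrt 2 ^ 4] => replace (sqrt 2 ^ 4) with ((sqrt 2 ^ 2) ^ 2) by ring end);
    rewrite ?pow2_sqrt by lra; ring
  | .. ]; try (repeat split; nra).

Ltac normargs s se E F Q :=
  repeat match goal with
  | |- context [exp ?X] => first [ replace (exp X) with Q by (unfold Q; f_equal; field; lra)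
                                 | replace (exp X) with Q by (unfold Q; f_equal; s2tac)
                                 | replace (exp X) with E by (unfold E; f_equal; s2tac) ]
  | |- context [Erf ?X] => first [ replace (Erf X) with F by (unfold F; f_equal; s2tac)
                                 | replace (Erf X) with (- F) by (unfold F; rewrite <- Erf_odd; f_equal; s2tac) ]
  end.



Lemma Kc_pos s : 0 < s -> 0 < Kc s.
Proof.
  intros Hs. unfold Kc. apply Rinv_0_lt_compat, Rmult_lt_0_compat; auto.
  apply sqrt_lt_R0. pose proof PI_RGT_0. lra.
Qed.

Lemma Tder m s se : 0 < s -> 0 < se ->
  let a := sqrt 2 * s / se in
  is_derive (fun x => Nval m s se x / Dval m s se x) m (a / 2 * (2 / (sqrt PI * erfcx (a / 2)) - a)).
Proof.
  intros Hs Hse a. pose proof sqrt2_pos. unfold a.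
  unfold erfcx. change (RInt (fun t => exp (- t ^ 2)) 0 (sqrt 2 * s / se / 2)) with (Erf (sqrt 2 * s / se / 2)).
  assert (HQE : exp (s ^ 2 / (2 * se ^ 2)) * exp (- (sqrt 2 * s / se / 2) ^ 2) = 1).
  { rewrite <- exp_plus, <- exp_0. f_equal. s2tac. }
  assert (HP : Erf (sqrt 2 * s / se / 2) < sqrt PI / 2) by apply Erf_lt.
  pose proof (Kc_pos s Hs). pose proof sqrtPI_pos.
  assert (HE : 0 < exp (- (sqrt 2 * s / se / 2) ^ 2)) by apply exp_pos.
  assert (HQ : 0 < exp (s ^ 2 / (2 * se ^ 2))) by apply exp_pos.
  unfold Nval, Dval, Hf, A1, A2, mu1, mu2.
  auto_derive.
  - set (E := exp (- (sqrt 2 * s / se / 2) ^ 2)) in *.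
    set (F := Erf (sqrt 2 * s / se / 2)) in *.
    set (Q := exp (s ^ 2 / (2 * se ^ 2))) in *.
    normargs s se E F Q.
    repeat split; try (eexists; apply Erf_derive).
    match goal with |- ?D <> 0 => replace D with (2 * (Kc s * / (2 * se) * Q * (sqrt 2 * s)) * (sqrt PI / 2 - F)) by ring end.
    apply Rgt_not_eq. apply Rmult_lt_0_compat; [|lra].
    apply Rmult_lt_0_compat; [lra|]. repeat apply Rmult_lt_0_compat; try lra. apply Rinv_0_lt_compat; lra.
  - rewrite !DErf.
    set (E := exp (- (sqrt 2 * s / se / 2) ^ 2)) in *.
    set (F := Erf (sqrt 2 * s / se / 2)) in *.
    set (Q := exp (s ^ 2 / (2 * se ^ 2))) in *.
    normargs s se E F Q.
    assert (Hs2 : s * (s * 1) = (sqrt 2 * s) ^ 2 / 2).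
    { rewrite Rpow_mult_distr, pow2_sqrt by lra. field. }
    rewrite !Hs2.
    set (b := sqrt 2 * s) in *.
    assert (Hb : 0 < b) by (apply Rmult_lt_0_compat; lra).
    replace Q with (/ E) by (apply Rmult_eq_reg_r with E; [rewrite HQE; field|]; lra).
    field.
    repeat split; try lra.
    match goal with |- ?D <> 0 => replace D with (2 * (Kc s * b) * (sqrt PI - 2 * F)) by ring end.
    apply Rgt_not_eq. apply Rmult_lt_0_compat; [|lra].
    apply Rmult_lt_0_compat; [lra|]. apply Rmult_lt_0_compat; lra.
Qed.

Theorem mainTheorem15 (s0 se theta0 : R) (hs0 : 0 < s0) (hse : 0 < se) :
  let a := sqrt 2 * s0 / se in
  is_derive (theta1 theta0 s0 se) theta0
    (a / 2 * (2 / (sqrt PI * erfcx (a / 2)) - a)).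
Proof.
  intros a.
  apply (is_derive_ext (fun x => Nval theta0 s0 se x / Dval theta0 s0 se x)).
  - intros x. unfold theta1. rewrite N_eq, D_eq by assumption. reflexivity.
  - apply Tder; assumption.
Qed.
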